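(* Let $\bar A\in\{0,1\}^{n\times n}$, $\bar S\in\{0,1\}^{n\times q}$, and let $\mathcal B(\bar A,\bar S)$, $\mathcal B(\bar A)$, $\mathcal B(\bar S)$ be as in the context. Define $$t=\max\{|F| : F \text{ a matching of } \mathcal B(\bar S),\ \mathcal R(F)\subseteq \mathcal U_R(M') \text{ for some maximum matching } M' \text{ of } \mathcal B(\bar A)\}.$$ Let $M^*$ be a maximum matching of $\mathcal B(\bar A,\bar S)$ and set $M_{\bar A}=M^*\cap\mathcal E_{\mathcal X,\mathcal X}$, $M_{\bar S}=M^*\cap\mathcal E_{\mathcal S,\mathcal X}$. Then $M^*=M_{\bar S}\cup M_{\bar A}$, $M_{\bar A}$ and $M_{\bar S}$ are disjoint matchings of $\mathcal B(\bar A)$ and $\mathcal B(\bar S)$ respectively, $\mathcal R(M_{\bar S})\subseteq\mathcal U_R(M_{\bar A})$, and $M_{\bar S}$ contains a largest collection of edges incoming into the set of right-unmatched vertices of some maximum matching of $\mathcal B(\bar A)$; that is, there exist a maximum matching $M'$ of $\mathcal B(\bar A)$ and a subset $E\subseteq M_{\bar S}$ with $\mathcal R(E)\subseteq\mathcal U_R(M')$ and $|E|=t$.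
   Context: State variables $\mathcal X=\{x_1,\dots,x_n\}$, slack variables $\mathcal S=\{s_1,\dots,s_q\}$. $\mathcal B(\bar A,\bar S)$ is the bipartite graph with left vertex set $\mathcal X\cup\mathcal S$, right vertex set $\mathcal X$ (left and right copies of $\mathcal X$ are distinct vertices), and edge set $\mathcal E_{\mathcal X,\mathcal X}\cup\mathcal E_{\mathcal S,\mathcal X}$, where $\mathcal E_{\mathcal X,\mathcal X}=\{(x_i,x_j):\bar A_{ji}\neq 0\}$ and $\mathcal E_{\mathcal S,\mathcal X}=\{(s_k,x_j):\bar S_{jk}\neq0\}$ (first endpoint left, second right). $\mathcal B(\bar A)$ is the subgraph with left vertices $\mathcal X$ and edges $\mathcal E_{\mathcal X,\mathcal X}$; $\mathcal B(\bar S)$ is the subgraph with left vertices $\mathcal S$ and edges $\mathcal E_{\mathcal S,\mathcal X}$; both have right vertex set $\mathcal X$. A matching is a set of edges no two sharing a left endpoint or a right endpoint; a maximum matching is one of largest cardinality. $\mathcal R(E)$ is the set of right endpoints of the edges in $E$. For a matching $M$, $\mathcal U_R(M)$ is the set of right vertices not covered by $M$. *)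

(* Defs.v *)
From HB Require Import structures.
From mathcomp Require Import all_boot.
Set Implicit Arguments. Unset Strict Implicit. Unset Printing Implicit Defensive.

(* Left vertices: X + S, encoded as 'I_n + 'I_q (inl i = x_i, inr k = s_k).
   Right vertices: X, encoded as 'I_n.  An edge is a pair (left, right). *)
Definition edge (n q : nat) : finType := (('I_n + 'I_q)%type * 'I_n)%type.

Definition EXX n q (A : 'I_n -> 'I_n -> bool) : {set edge n q} :=
  [set e : edge n q | if e.1 is inl i then A e.2 i else false].

Definition ESX n q (S : 'I_n -> 'I_q -> bool) : {set edge n q} :=
  [set e : edge n q | if e.1 is inr k then S e.2 k else false].

Definition EAS n q (A : 'I_n -> 'I_n -> bool) (S : 'I_n -> 'I_q -> bool) : {set edge n q} :=
  EXX q A :|: ESX S.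

Definition matching (T U : finType) (E M : {set (T * U)%type}) : bool :=
  (M \subset E) &&
  [forall e1 in M, forall e2 in M,
     ((e1.1 == e2.1) || (e1.2 == e2.2)) ==> (e1 == e2)].

Definition maximum_matching (T U : finType) (E M : {set (T * U)%type}) : bool :=
  matching E M && [forall M' : {set (T * U)%type}, matching E M' ==> (#|M'| <= #|M|)].

Definition Rends (T U : finType) (E : {set (T * U)%type}) : {set U} :=
  [set e.2 | e in E].

Definition UR (T U : finType) (M : {set (T * U)%type}) : {set U} :=
  ~: Rends M.

Definition tmax n q (A : 'I_n -> 'I_n -> bool) (S : 'I_n -> 'I_q -> bool) : nat :=
  \max_(F : {set edge n q} |
          matching (ESX S) F &&
          [exists M' : {set edge n q},
             maximum_matching (EXX q A) M' && (Rends F \subset UR M')])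
     #|F|.

(* Main.v *)
Require Import Defs.
From HB Require Import structures.
From mathcomp Require Import all_boot.
From mathcomp Require Import zify.

Section H.
Context {T U : finType}.
Implicit Types E M N : {set (T * U)%type}.

Lemma matching_eq {E M e1 e2} : matching E M -> e1 \in M -> e2 \in M ->
  (e1.1 == e2.1) || (e1.2 == e2.2) -> e1 = e2.
Proof.
case/andP=> _ /forall_inP H h1 h2 h.
by move/forall_inP: (H e1 h1) => /(_ e2 h2) /implyP /(_ h) /eqP.
Qed.

Lemma matchingI E M : M \subset E ->
  (forall e1 e2, e1 \in M -> e2 \in M -> (e1.1 == e2.1) || (e1.2 == e2.2) -> e1 = e2) ->
  matching E M.
Proof.
move=> s H; apply/andP; split=>//; apply/forall_inP=> e1 h1;
apply/forall_inP=> e2 h2; apply/implyP=> h; apply/eqP; exact: H.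
Qed.

Lemma matching_subE {E M} : matching E M -> M \subset E.
Proof. by case/andP. Qed.

Lemma matching_sub {E E' M M'} : matching E M -> M' \subset M -> M' \subset E' -> matching E' M'.
Proof.
move=> mM s s'; apply: matchingI => // e1 e2 h1 h2 h; apply: (matching_eq mM) => //;
exact: (subsetP s).
Qed.

Lemma card_Rends {E M} : matching E M -> #|Rends M| = #|M|.
Proof.
move=> mM; apply: card_in_imset => e1 e2 h1 h2 h.
by apply: (matching_eq mM) => //; rewrite h eqxx orbT.
Qed.

Lemma RendsP M y : reflect (exists2 e, e \in M & y = e.2) (y \in Rends M).
Proof. exact: imsetP. Qed.

Lemma ex_max E : exists M, maximum_matching E M.
Proof.
have m0 : matching E set0.
  by apply: matchingI => [|? ?]; [exact: sub0set | rewrite inE].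
case: (arg_maxnP (fun M : {set (T * U)%type} => #|M|) m0) => M mM HM.
exists M; apply/andP; split=>//; apply/forallP=> M'; apply/implyP => h; exact: HM.
Qed.

Lemma max_size {E M1 M2} : maximum_matching E M1 -> maximum_matching E M2 -> #|M1| = #|M2|.
Proof.
case/andP=> m1 /forallP H1; case/andP=> m2 /forallP H2; apply/eqP; rewrite eqn_leq.
by rewrite (implyP (H2 M1) m1) (implyP (H1 M2) m2).
Qed.

Lemma max_le {E M M'} : maximum_matching E M -> matching E M' -> #|M'| <= #|M|.
Proof. by case/andP=> _ /forallP H h; exact: (implyP (H M') h). Qed.

Lemma matchingU1 E M e : matching E M -> e \in E ->
  (forall f, f \in M -> f.1 != e.1) -> e.2 \notin Rends M -> matching E (e |: M).
Proof.
move=> mM eE H1 H2; apply: matchingI.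
  by rewrite subUset sub1set eE matching_subE.
have key : forall f, f \in M -> (e.1 == f.1) || (e.2 == f.2) -> False.
  move=> f fM /orP [/eqP h|/eqP h].
    by move: (H1 f fM); rewrite h eqxx.
  by move/negP: H2; apply; apply/RendsP; exists f.
move=> e1 e2; rewrite !inE => /orP [/eqP->|h1] /orP [/eqP->|h2] //.
- by move=> h; case: (key _ h2 h).
- by move=> h; exfalso; apply: (key e1 h1); rewrite (eq_sym e.1) (eq_sym e.2).
- exact: (matching_eq mM).
Qed.

Lemma lemmaL E N : matching E N -> exists M, maximum_matching E M /\ Rends N \subset Rends M.
Proof.
move=> mN; have [M0 mM0] := ex_max E.
case: (arg_maxnP (fun M => #|M :&: N|) mM0) => M mM HM.
exists M; split=>//; apply/subsetP=> y /RendsP [e eN ->].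
apply/negPn/negP => ny.
have eE : e \in E by apply: (subsetP (matching_subE mN)).
have mM' := andP mM; case: mM' => mm _.
have eM : e \notin M by apply/negP=> eM; move/negP: ny; apply; apply/imsetP; exists e.
case: (pickP [pred f in M | f.1 == e.1]) => [f /andP [fM /eqP fe]|none].
- have mMf : matching E (M :\ f) by apply: (matching_sub mm); [exact: subD1set|
    apply: subset_trans (matching_subE mm); exact: subD1set].
  have mM2 : matching E (e |: (M :\ f)).
    apply: matchingU1 => //.
      move=> g; rewrite !inE => /andP [gf gM]; apply/negP => /eqP ge.
      move/negP: gf; apply; apply/eqP; apply: (matching_eq mm) => //.
      by rewrite ge fe eqxx.
    apply/negP=> /RendsP [g]; rewrite !inE => /andP [_ gM] eg.
    by move/negP: ny; apply; apply/imsetP; exists g.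
  have cM2 : #|e |: (M :\ f)| = #|M|.
    by rewrite cardsU1 (cardsD1 f M) fM !inE negb_and eM orbT.
  have mx2 : maximum_matching E (e |: (M :\ f)).
    apply/andP; split=>//; apply/forallP=> M'; apply/implyP=> h.
    by rewrite cM2; exact: max_le mM h.
  have := HM _ mx2.
  have fN : f \notin N.
    apply/negP=> fN; have ef : e = f by apply: (matching_eq mN) => //; rewrite fe eqxx.
    by move/negP: eM; apply; rewrite ef.
  have -> : (e |: (M :\ f)) :&: N = e |: (M :&: N).
    apply/setP=> g; rewrite !inE; case: (eqVneq g e) => [->|ge] //=.
    case: (eqVneq g f) => [->|] //=; by rewrite (negbTE fN) andbF.
  by rewrite cardsU1 in_setI (negbTE eM) /= add1n ltnn.
- have mM2 : matching E (e |: M).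
    apply: matchingU1 => //.
      move=> g gM; apply/negP => /eqP ge.
      by move: (none g); rewrite /= gM ge eqxx.
  have := max_le mM mM2.
  by rewrite cardsU1 eM /= add1n ltnn.
Qed.

Lemma matchingU E1 E2 M1 M2 : matching E1 M1 -> matching E2 M2 ->
  (forall e1 e2, e1 \in M1 -> e2 \in M2 -> (e1.1 != e2.1) && (e1.2 != e2.2)) ->
  matching (E1 :|: E2) (M1 :|: M2).
Proof.
move=> m1 m2 H; apply: matchingI.
  by apply: setUSS; exact: matching_subE.
move=> e1 e2; rewrite !inE => /orP [h1|h1] /orP [h2|h2] h.
- exact: (matching_eq m1).
- by move: (H _ _ h1 h2); rewrite -negb_or h.
- by move: (H _ _ h2 h1); rewrite -negb_or eq_sym (eq_sym e2.2) h.
- exact: (matching_eq m2).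
Qed.

End H.

Lemma EXX_ESX n q (A : 'I_n -> 'I_n -> bool) (S : 'I_n -> 'I_q -> bool) e :
  e \in EXX q A -> e \in ESX S -> False.
Proof. by rewrite !inE; case: e.1. Qed.

Lemma arith (a b c d e f g h i : nat) : a + b = c ->
 a <= d - e -> e <= d -> f <= i -> f = g + h -> h = d -> i = c + e -> g <= b.
Proof. lia. Qed.

Theorem lemma2 (n q : nat) (A : 'I_n -> 'I_n -> bool) (S : 'I_n -> 'I_q -> bool)
  (Mstar : {set edge n q}) :
  maximum_matching (EAS A S) Mstar ->
  let MA := Mstar :&: EXX q A in
  let MS := Mstar :&: ESX S in
  [/\ Mstar = MS :|: MA /\ [disjoint MA & MS],
      matching (EXX q A) MA,
      matching (ESX S) MS,
      Rends MS \subset UR MA &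
      exists M' : {set edge n q}, maximum_matching (EXX q A) M' /\
        exists E : {set edge n q},
          [/\ E \subset MS, Rends E \subset UR M' & #|E| = tmax A S]].
Proof.
move=> mx MA MS.
have mS := andP mx; case: mS => mS _.
have sub := matching_subE mS.
have eqU : Mstar = MS :|: MA.
  apply/setP=> e; rewrite !inE; case: (boolP (e \in Mstar)) => h //=.
  by move: (subsetP sub e h); rewrite !inE orbC.
have disj : [disjoint MA & MS].
  rewrite -setI_eq0; apply/eqP/setP=> e; rewrite in_set0 !in_setI; apply/negP => /andP [/andP [_ h1] /andP [_ h2]].
  exact: EXX_ESX h1 h2.
have mA : matching (EXX q A) MA by apply: (matching_sub mS); rewrite ?subsetIl ?subsetIr.
have mSS : matching (ESX S) MS by apply: (matching_sub mS); rewrite ?subsetIl ?subsetIr.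
have RR : Rends MS \subset UR MA.
  apply/subsetP=> y /RendsP [e eS ->]; rewrite inE; apply/negP=> /RendsP [f fA ef].
  have ee : e = f.
    apply: (matching_eq mS); rewrite ?ef ?eqxx ?orbT //.
    - by move: eS; rewrite inE => /andP [].
    - by move: fA; rewrite inE => /andP [].
  move: eS fA; rewrite ee !in_setI => /andP [_ h1] /andP [_ h2]; exact: EXX_ESX h2 h1.
split=> //.
have [M'' [mxM'' RA]] := lemmaL _ _ mA.
have mM'' := andP mxM''; case: mM'' => mM'' _.
set B := [set e : edge n q | e.2 \in Rends M''].
set E0 := MS :\: B.
have mE0 : matching (ESX S) E0 by apply: (matching_sub mSS); rewrite ?subsetDl // (subset_trans (subsetDl _ _) (matching_subE mSS)).
have RE0 : Rends E0 \subset UR M''.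
  by apply/subsetP=> y /RendsP [e]; rewrite !inE => /andP [h _] ->.
have le1 : #|E0| <= tmax A S.
  rewrite /tmax; apply: (leq_bigmax_cond (P := fun F : {set edge n q} => matching (ESX S) F &&
          [exists M' : {set edge n q},
             maximum_matching (EXX q A) M' && (Rends F \subset UR M')])) => /=.
  by rewrite mE0 /=; apply/existsP; exists M''; rewrite mxM''.
have [F0 hF0 eqt] : {F0 | (matching (ESX S) F0 &&
          [exists M' : {set edge n q},
             maximum_matching (EXX q A) M' && (Rends F0 \subset UR M')]) & tmax A S = #|F0| }.
  apply: eq_bigmax_cond; apply/card_gt0P; exists set0; rewrite /=.
  have [M2 mx2] := ex_max (EXX q A).
  apply/andP; split.
    by apply: matchingI => [|? ?]; [exact: sub0set | rewrite inE].
  by apply/existsP; exists M2; rewrite mx2 /=; apply/subsetP=> y /RendsP [e]; rewrite in_set0.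
move: hF0 => /andP [mF0 /existsP [M1 /andP [mxM1 RF0]]].
have mM1 := andP mxM1; case: mM1 => mM1 _.
have mU : matching (EAS A S) (F0 :|: M1).
  rewrite /EAS setUC; apply: matchingU => // e1 e2 h1 h2; apply/andP; split.
    move: (subsetP (matching_subE mF0) e1 h1) (subsetP (matching_subE mM1) e2 h2).
    by rewrite !inE; case: e1.1; case: e2.1.
  apply/negP=> /eqP e12.
  have : e1.2 \in UR M1 by apply: (subsetP RF0); apply/imsetP; exists e1.
  by rewrite inE e12 => /negP; apply; apply/imsetP; exists e2.
have cU : #|F0 :|: M1| = #|F0| + #|M1|.
  rewrite cardsU; have -> : F0 :&: M1 = set0.
    apply/setP=> e; rewrite in_set0 in_setI; apply/negP=> /andP [h1 h2].
    exact: EXX_ESX (subsetP (matching_subE mM1) e h2) (subsetP (matching_subE mF0) e h1).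
  by rewrite cards0 subn0.
have le2 := max_le mx mU.
have e1 := max_size mxM1 mxM''.
have cstar : #|Mstar| = #|MS| + #|MA|.
  rewrite eqU cardsU; have -> : MS :&: MA = set0.
    apply/setP=> e; rewrite in_set0 !in_setI; apply/negP=> /andP [/andP [_ h1] /andP [_ h2]].
    exact: EXX_ESX h2 h1.
  by rewrite cards0 subn0.
have cID := cardsID B MS.
have le3 : #|MS :&: B| <= #|M''| - #|MA|.
  have mSB : matching (ESX S) (MS :&: B) by apply: (matching_sub mSS); rewrite ?subsetIl // (subset_trans (subsetIl _ _) (matching_subE mSS)).
  rewrite -(card_Rends mSB) -(card_Rends mM'') -(card_Rends mA).
  have sA : Rends MA \subset Rends M'' by [].
  have -> : #|Rends M''| - #|Rends MA| = #|Rends M'' :\: Rends MA|.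
    by rewrite cardsD (setIidPr sA).
  apply: subset_leq_card; apply/subsetP=> y /RendsP [e]; rewrite in_setI => /andP [eS eB] ->.
  rewrite /B inE in eB; rewrite in_setD eB andbT.
  have := subsetP RR e.2; rewrite inE; apply; apply/imsetP; by exists e.
have le4 : #|MA| <= #|M''| by rewrite -(card_Rends mA) -(card_Rends mM''); exact: subset_leq_card.
exists M''; split=> //; exists E0; split=> //; first exact: subsetDl.
apply/eqP; rewrite eqn_leq le1 /= eqt.
move: cID le3 le4 le2 cU e1 cstar; rewrite -/E0.
move: #|MS :&: B| #|E0| #|MS| #|M''| #|MA| #|F0 :|: M1| #|F0| #|M1| #|Mstar|.
exact: arith.
Qed.
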